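(* For all integers $n\geq 4$, with $x,y,z,y_1,y_2,z_1,z_2,\Phi,f$ as in the context, \[f(n)<\frac{\Phi(x-2y_1+z_2)\,(x^5-x^4-1)\,y^{14}\,(z_2z^4-z^4-1)}{x^7\,(y^{10}-2y_2y^8+y^8+2y_1y^4-2y^4+1)\,z_1z^6}<1.\]
   Context: Let $\mu(m)=\pi\sqrt{m}$. For an integer $n\geq 2$ put $x=\mu(n-1)$, $y=\mu(n)=\sqrt{x^2+\pi^2}$, $z=\mu(n+1)=\sqrt{x^2+2\pi^2}$, and \[f(n)=e^{x-2y+z}\,\frac{y^{14}(x^5-x^4-1)(z^5-z^4-1)}{x^7z^7(y^5-y^4+1)^2}.\] Define \begin{align*} y_2&=x+\frac{\pi^2}{2x}-\frac{\pi^4}{8x^3}+\frac{\pi^6}{16x^5}-\frac{5\pi^8}{128x^7}+\frac{7\pi^{10}}{256x^9},\qquad y_1=y_2-\frac{21\pi^{12}}{1024x^{11}},\\ z_2&=x+\frac{\pi^2}{x}-\frac{\pi^4}{2x^3}+\frac{\pi^6}{2x^5}-\frac{5\pi^8}{8x^7}+\frac{7\pi^{10}}{8x^9},\qquad z_1=z_2-\frac{21\pi^{12}}{16x^{11}}, \end{align*} and $\Phi(t)=1+t+\frac{t^2}{2}+\frac{t^3}{6}+\frac{t^4}{24}+\frac{t^5}{120}+\frac{t^6}{720}$. *)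

(* Defs.v *)
From Stdlib Require Import Reals Lra.
Open Scope R_scope.

Definition mu (m : R) : R := PI * sqrt m.

Definition xv (n : nat) : R := mu (INR n - 1).
Definition yv (n : nat) : R := mu (INR n).
Definition zv (n : nat) : R := mu (INR n + 1).

Definition fval (n : nat) : R :=
  let x := xv n in let y := yv n in let z := zv n in
  exp (x - 2 * y + z) *
  (y ^ 14 * (x ^ 5 - x ^ 4 - 1) * (z ^ 5 - z ^ 4 - 1)) /
  (x ^ 7 * z ^ 7 * (y ^ 5 - y ^ 4 + 1) ^ 2).

Definition y2f (x : R) : R :=
  x + PI ^ 2 / (2 * x) - PI ^ 4 / (8 * x ^ 3) + PI ^ 6 / (16 * x ^ 5)
    - 5 * PI ^ 8 / (128 * x ^ 7) + 7 * PI ^ 10 / (256 * x ^ 9).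
Definition y1f (x : R) : R := y2f x - 21 * PI ^ 12 / (1024 * x ^ 11).
Definition z2f (x : R) : R :=
  x + PI ^ 2 / x - PI ^ 4 / (2 * x ^ 3) + PI ^ 6 / (2 * x ^ 5)
    - 5 * PI ^ 8 / (8 * x ^ 7) + 7 * PI ^ 10 / (8 * x ^ 9).
Definition z1f (x : R) : R := z2f x - 21 * PI ^ 12 / (16 * x ^ 11).

Definition Phi (t : R) : R :=
  1 + t + t ^ 2 / 2 + t ^ 3 / 6 + t ^ 4 / 24 + t ^ 5 / 120 + t ^ 6 / 720.

Definition middle (n : nat) : R :=
  let x := xv n in let y := yv n in let z := zv n in
  let y1 := y1f x in let y2 := y2f x in let z1 := z1f x in let z2 := z2f x in
  Phi (x - 2 * y1 + z2) * (x ^ 5 - x ^ 4 - 1) * y ^ 14 * (z2 * z ^ 4 - z ^ 4 - 1) /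
  (x ^ 7 * (y ^ 10 - 2 * y2 * y ^ 8 + y ^ 8 + 2 * y1 * y ^ 4 - 2 * y ^ 4 + 1)
   * z1 * z ^ 6).

(* Main.v *)
Require Import Defs.
From Stdlib Require Import Reals Lra Psatz List.
Open Scope R_scope.

Fixpoint horner (l : list R) (a : R) : R :=
  match l with nil => 0 | c :: l' => c + a * horner l' a end.
Fixpoint hlb (l : list R) (b : R) : R :=
  match l with nil => 0 | c :: l' => c + b * Rmin 0 (hlb l' b) end.
Lemma horner_ge l a b : 0 <= a <= b -> hlb l b <= horner l a.
Proof.
  intros [Ha Hb]. induction l as [|c l IH]; simpl. lra.
  apply Rplus_le_compat_l.
  destruct (Rle_dec 0 (hlb l b)) as [H|H].
  - rewrite Rmin_left by lra. rewrite Rmult_0_r. apply Rmult_le_pos; lra.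
  - rewrite Rmin_right by lra.
    apply Rle_trans with (a * hlb l b).
    + assert (0 <= (b - a) * (- hlb l b)) by (apply Rmult_le_pos; lra). lra.
    + apply Rmult_le_compat_l; lra.
Qed.
Ltac eval_rmin :=
  repeat match goal with
  | |- context [Rmin 0 ?e] =>
      lazymatch e with context [Rmin] => fail | _ =>
        first [rewrite (Rmin_left 0 e) by lra | rewrite (Rmin_right 0 e) by lra] end
  end.
Tactic Notation "hpos" constr(b) :=
  eapply Rlt_le_trans; [| apply (horner_ge _ _ b); lra]; simpl hlb; eval_rmin; lra.

Definition P1 (a : R) := 1 + a/2 - a^2/8 + a^3/16 - 5*a^4/128 + 7*a^5/256 - 21*a^6/1024.
Definition Q1 (a : R) := 1 + a/2 - a^2/8 + a^3/16 - 5*a^4/128 + 7*a^5/256.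
Definition Q2 (a : R) := 1 + a - a^2/2 + a^3/2 - 5*a^4/8 + 7*a^5/8.
Definition P2 (a : R) := Q2 a - 21*a^6/16.
Definition Uu (a : R) := 1/4 - 3*a/8 + 35*a^2/64 - 105*a^3/128 - 21*a^4/512.

Lemma exp_T7 s : 0 <= s ->
  1 + s + s^2/2 + s^3/6 + s^4/24 + s^5/120 + s^6/720 + s^7/5040 <= exp s.
Proof.
  intros Hs.
  assert (G : Un_growing (E1 s)).
  { intro n. unfold E1. rewrite tech5.
    match goal with |- _ <= _ + ?t => assert (0 <= t) end.
    { apply Rmult_le_pos. left; apply Rinv_0_lt_compat, INR_fact_lt_0.
      apply pow_le; lra. }
    lra. }
  pose proof (growing_ineq _ _ G (E1_cvg s) 7) as H.
  unfold E1 in H. cbn [sum_f_R0] in H.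
  assert (F : forall k, INR (Factorial.fact k) = IZR (Z.of_nat (Factorial.fact k))) by (intro; apply INR_IZR_INZ).
  rewrite !F in H. cbn in H.
  lra.
Qed.

Lemma L_P1sq a : 0 < a <= (1/3) -> P1 a ^ 2 < 1 + a.
Proof.
  intros Hv.
  assert (HE : 1 + a - (P1 a ^ 2) = a^7 * horner ((33/1024) :: (-165/16384) :: (77/16384) :: (-77/32768) :: (147/131072) :: (-441/1048576) :: nil) a)
    by (unfold P1, Q1, P2, Q2, Uu, Phi; simpl horner; field).
  assert (HP : 0 < a^7 * horner ((33/1024) :: (-165/16384) :: (77/16384) :: (-77/32768) :: (147/131072) :: (-441/1048576) :: nil) a)
    by (apply Rmult_lt_0_compat; [apply pow_lt; lra | hpos (1/3)]).
  lra.
Qed.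

Lemma L_Q1sq a : 0 < a <= (1/3) -> 1 + a < Q1 a ^ 2.
Proof.
  intros Hv.
  assert (HE : Q1 a ^ 2 - (1 + a) = a^6 * horner ((21/512) :: (-3/256) :: (81/16384) :: (-35/16384) :: (49/65536) :: nil) a)
    by (unfold P1, Q1, P2, Q2, Uu, Phi; simpl horner; field).
  assert (HP : 0 < a^6 * horner ((21/512) :: (-3/256) :: (81/16384) :: (-35/16384) :: (49/65536) :: nil) a)
    by (apply Rmult_lt_0_compat; [apply pow_lt; lra | hpos (1/3)]).
  lra.
Qed.

Lemma L_P2sq a : 0 < a <= (1/3) -> P2 a ^ 2 < 1 + 2 * a.
Proof.
  intros Hv.
  assert (HE : 1 + 2 * a - (P2 a ^ 2) = a^7 * horner ((33/8) :: (-165/64) :: (77/32) :: (-77/32) :: (147/64) :: (-441/256) :: nil) a)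
    by (unfold P1, Q1, P2, Q2, Uu, Phi; simpl horner; field).
  assert (HP : 0 < a^7 * horner ((33/8) :: (-165/64) :: (77/32) :: (-77/32) :: (147/64) :: (-441/256) :: nil) a)
    by (apply Rmult_lt_0_compat; [apply pow_lt; lra | hpos (1/3)]).
  lra.
Qed.

Lemma L_Q2sq a : 0 < a <= (1/3) -> 1 + 2 * a < Q2 a ^ 2.
Proof.
  intros Hv.
  assert (HE : Q2 a ^ 2 - (1 + 2 * a) = a^6 * horner ((21/8) :: (-3/2) :: (81/64) :: (-35/32) :: (49/64) :: nil) a)
    by (unfold P1, Q1, P2, Q2, Uu, Phi; simpl horner; field).
  assert (HP : 0 < a^6 * horner ((21/8) :: (-3/2) :: (81/64) :: (-35/32) :: (49/64) :: nil) a)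
    by (apply Rmult_lt_0_compat; [apply pow_lt; lra | hpos (1/3)]).
  lra.
Qed.

Lemma L_U5 a : 0 < a <= (1/3) -> a^2*(1+a)*P2 a/4 + 2*Q1 a*P2 a < (1+a)*(P2 a + 1).
Proof.
  intros Hv.
  assert (HE : (1+a)*(P2 a + 1) - (a^2*(1+a)*P2 a/4 + 2*Q1 a*P2 a) = a^2 * horner ((1/2) :: (-7/8) :: (21/64) :: (-85/128) :: (33/32) :: (77/256) :: (-207/512) :: (609/1024) :: (-77/512) :: (147/2048) :: nil) a)
    by (unfold P1, Q1, P2, Q2, Uu, Phi; simpl horner; field).
  assert (HP : 0 < a^2 * horner ((1/2) :: (-7/8) :: (21/64) :: (-85/128) :: (33/32) :: (77/256) :: (-207/512) :: (609/1024) :: (-77/512) :: (147/2048) :: nil) a)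
    by (apply Rmult_lt_0_compat; [apply pow_lt; lra | hpos (1/3)]).
  lra.
Qed.

Lemma L_Upos a : 0 < a <= (1/3) -> 0 < Uu a.
Proof.
  intros Hv.
  assert (HE : Uu a - (0) = a^0 * horner ((1/4) :: (-3/8) :: (35/64) :: (-105/128) :: (-21/512) :: nil) a)
    by (unfold P1, Q1, P2, Q2, Uu, Phi; simpl horner; field).
  assert (HP : 0 < a^0 * horner ((1/4) :: (-3/8) :: (35/64) :: (-105/128) :: (-21/512) :: nil) a)
    by (apply Rmult_lt_0_compat; [apply pow_lt; lra | hpos (1/3)]).
  lra.
Qed.

Lemma L_Ule a : 0 < a <= (1/3) -> Uu a < 1/4.
Proof.
  intros Hv.
  assert (HE : 1/4 - (Uu a) = a^1 * horner ((3/8) :: (-35/64) :: (105/128) :: (21/512) :: nil) a)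
    by (unfold P1, Q1, P2, Q2, Uu, Phi; simpl horner; field).
  assert (HP : 0 < a^1 * horner ((3/8) :: (-35/64) :: (105/128) :: (21/512) :: nil) a)
    by (apply Rmult_lt_0_compat; [apply pow_lt; lra | hpos (1/3)]).
  lra.
Qed.

Lemma L_U7 a : 0 < a <= (1/3) -> a < 729/100 * Uu a ^ 2 * (1+a)^4.
Proof.
  intros Hv.
  assert (HE : 729/100 * Uu a ^ 2 * (1+a)^4 - (a) = a^0 * horner ((729/1600) :: (-871/1600) :: (729/2560) :: (-729/2560) :: (-1763451/409600) :: (-2222721/409600) :: (-2043387/819200) :: (648081/655360) :: (280374129/26214400) :: (98237853/6553600) :: (86694867/13107200) :: (3536379/6553600) :: (321489/26214400) :: nil) a)
    by (unfold P1, Q1, P2, Q2, Uu, Phi; simpl horner; field).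
  assert (HP : 0 < a^0 * horner ((729/1600) :: (-871/1600) :: (729/2560) :: (-729/2560) :: (-1763451/409600) :: (-2222721/409600) :: (-2043387/819200) :: (648081/655360) :: (280374129/26214400) :: (98237853/6553600) :: (86694867/13107200) :: (3536379/6553600) :: (321489/26214400) :: nil) a)
    by (apply Rmult_lt_0_compat; [apply pow_lt; lra | hpos (1/3)]).
  lra.
Qed.

Lemma L_P1ge a : 0 < a <= (1/3) -> 1 < P1 a.
Proof.
  intros Hv.
  assert (HE : P1 a - (1) = a^1 * horner ((1/2) :: (-1/8) :: (1/16) :: (-5/128) :: (7/256) :: (-21/1024) :: nil) a)
    by (unfold P1, Q1, P2, Q2, Uu, Phi; simpl horner; field).
  assert (HP : 0 < a^1 * horner ((1/2) :: (-1/8) :: (1/16) :: (-5/128) :: (7/256) :: (-21/1024) :: nil) a)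
    by (apply Rmult_lt_0_compat; [apply pow_lt; lra | hpos (1/3)]).
  lra.
Qed.

Lemma L_P2ge a : 0 < a <= (1/3) -> 1 < P2 a.
Proof.
  intros Hv.
  assert (HE : P2 a - (1) = a^1 * horner ((1) :: (-1/2) :: (1/2) :: (-5/8) :: (7/8) :: (-21/16) :: nil) a)
    by (unfold P1, Q1, P2, Q2, Uu, Phi; simpl horner; field).
  assert (HP : 0 < a^1 * horner ((1) :: (-1/2) :: (1/2) :: (-5/8) :: (7/8) :: (-21/16) :: nil) a)
    by (apply Rmult_lt_0_compat; [apply pow_lt; lra | hpos (1/3)]).
  lra.
Qed.

Lemma L_Q1le a : 0 < a <= (1/3) -> Q1 a < 1 + a.
Proof.
  intros Hv.
  assert (HE : 1 + a - (Q1 a) = a^1 * horner ((1/2) :: (1/8) :: (-1/16) :: (5/128) :: (-7/256) :: nil) a)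
    by (unfold P1, Q1, P2, Q2, Uu, Phi; simpl horner; field).
  assert (HP : 0 < a^1 * horner ((1/2) :: (1/8) :: (-1/16) :: (5/128) :: (-7/256) :: nil) a)
    by (apply Rmult_lt_0_compat; [apply pow_lt; lra | hpos (1/3)]).
  lra.
Qed.

Lemma L_Q1up a : 0 < a <= (1/3) -> Q1 a ^ 2 - (1 + a) < a^6.
Proof.
  intros Hv.
  assert (HE : a^6 - (Q1 a ^ 2 - (1 + a)) = a^6 * horner ((491/512) :: (3/256) :: (-81/16384) :: (35/16384) :: (-49/65536) :: nil) a)
    by (unfold P1, Q1, P2, Q2, Uu, Phi; simpl horner; field).
  assert (HP : 0 < a^6 * horner ((491/512) :: (3/256) :: (-81/16384) :: (35/16384) :: (-49/65536) :: nil) a)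
    by (apply Rmult_lt_0_compat; [apply pow_lt; lra | hpos (1/3)]).
  lra.
Qed.

Lemma L_U8 s : 0 < s <= (1/5) -> 1 < Phi (-s) * (1 + s + s^2/2 + s^3/6 + s^4/24 + s^5/120 + s^6/720 + s^7/5040).
Proof.
  intros Hv.
  assert (HE : Phi (-s) * (1 + s + s^2/2 + s^3/6 + s^4/24 + s^5/120 + s^6/720 + s^7/5040) - (1) = s^7 * horner ((1/5040) :: (1/6720) :: (1/10080) :: (1/75600) :: (1/120960) :: (1/3628800) :: (1/3628800) :: nil) s)
    by (unfold P1, Q1, P2, Q2, Uu, Phi; simpl horner; field).
  assert (HP : 0 < s^7 * horner ((1/5040) :: (1/6720) :: (1/10080) :: (1/75600) :: (1/120960) :: (1/3628800) :: (1/3628800) :: nil) s)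
    by (apply Rmult_lt_0_compat; [apply pow_lt; lra | hpos (1/5)]).
  lra.
Qed.

Lemma L_phiq s : 0 < s <= (1/5) -> Phi (-s) < 1 - s + s^2/2.
Proof.
  intros Hv.
  assert (HE : 1 - s + s^2/2 - (Phi (-s)) = s^3 * horner ((1/6) :: (-1/24) :: (1/120) :: (-1/720) :: nil) s)
    by (unfold P1, Q1, P2, Q2, Uu, Phi; simpl horner; field).
  assert (HP : 0 < s^3 * horner ((1/6) :: (-1/24) :: (1/120) :: (-1/720) :: nil) s)
    by (apply Rmult_lt_0_compat; [apply pow_lt; lra | hpos (1/5)]).
  lra.
Qed.

Lemma L_phipos s : 0 < s <= (1/5) -> 0 < Phi (-s).
Proof.
  intros Hv.
  assert (HE : Phi (-s) - (0) = s^0 * horner ((1) :: (-1) :: (1/2) :: (-1/6) :: (1/24) :: (-1/120) :: (1/720) :: nil) s)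
    by (unfold P1, Q1, P2, Q2, Uu, Phi; simpl horner; field).
  assert (HP : 0 < s^0 * horner ((1) :: (-1) :: (1/2) :: (-1/6) :: (1/24) :: (-1/120) :: (1/720) :: nil) s)
    by (apply Rmult_lt_0_compat; [apply pow_lt; lra | hpos (1/5)]).
  lra.
Qed.


Lemma sq_lt u v : 0 <= v -> u^2 < v^2 -> u < v.
Proof. intros Hv H. destruct (Rlt_or_le u v) as [h|h]; auto. nra. Qed.

Lemma div_le_l u d c : 0 < d -> u <= c * d -> u / d <= c.
Proof. intros. unfold Rdiv. apply Rmult_le_reg_r with d; auto.
  rewrite Rmult_assoc, Rinv_l by lra. lra. Qed.

Definition A1f (al:R) := 1 - al - al^5.
Definition A3f (al a:R) := (Q2 a - al - al^5/(1+2*a)^2)/P2 a.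
Definition Ef (al a:R) := 1 - 2*al*Q1 a/(1+a) + al^2/(1+a) + 2*al^5*P1 a/(1+a)^3
   - 2*al^6/(1+a)^3 + al^10/(1+a)^5.
Definition A2f (a:R) := (1+a)^2/(1+2*a).

Lemma chain al a : 0 < al <= 1/5 -> 0 < a <= 1/3 -> a^4 <= 16*al^2/27 ->
  0 < A1f al * A3f al a <= Ef al a.
Proof.
  intros Hal Ha Ha4.
  pose proof (L_P1ge a Ha) as hP1. pose proof (L_P2ge a Ha) as hP2.
  pose proof (L_Q1le a Ha) as hQ1le. pose proof (L_U5 a Ha) as hU5.
  pose proof (L_Q1sq a Ha) as hQ1sq. pose proof (L_Q1up a Ha) as hQ1up.
  assert (hQ1 : Q1 a = P1 a + 21*a^6/1024) by (unfold Q1, P1; field).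
  assert (hQ2 : Q2 a = P2 a + 21*a^6/16) by (unfold P2; field).
  assert (ha6 : 0 <= a^6) by (apply pow_le; lra).
  assert (hQ1ge : 1 <= Q1 a) by lra.
  set (P1v := P1 a) in *. set (P2v := P2 a) in *. set (Q1v := Q1 a) in *. set (Q2v := Q2 a) in *.
  set (bt := al / P2v). set (gm := al * Q1v / (1+a)). set (dl := al * a^2/8).
  set (e2 := 21*a^6/(16*P2v)).
  set (rho := al^5/((1+2*a)^2*P2v)).
  assert (h1a : 0 < 1 + a) by lra. assert (h2a : 0 < 1 + 2*a) by lra.
  assert (hal5 : 0 <= al^5 <= 1/3125).
  { split. apply pow_le; lra. replace (1/3125) with ((1/5)^5) by field. apply pow_incr; lra. }
  assert (S1 : 0 < A1f al <= 1 - al) by (unfold A1f; lra).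
  assert (Hrho : 0 <= rho <= al^5).
  { unfold rho. split. apply Rle_mult_inv_pos; [lra| apply Rmult_lt_0_compat; [apply pow_lt|]; lra].
    apply div_le_l. apply Rmult_lt_0_compat; [apply pow_lt|]; lra.
    assert (1 <= (1 + 2*a)^2) by nra.
    assert (1 <= (1+2*a)^2 * P2v) by nra. nra. }
  assert (Hbt : 0 < bt <= al).
  { unfold bt. split. apply Rdiv_lt_0_compat; lra.
    apply div_le_l; nra. }
  assert (He2 : 0 <= e2 <= 21*a^6/16).
  { unfold e2. split. apply Rle_mult_inv_pos; lra.
    apply div_le_l; nra. }
  assert (HA3 : A3f al a = 1 + e2 - bt - rho).
  { unfold A3f, e2, bt, rho. fold P2v Q2v. rewrite hQ2. field. split; lra. }
  assert (S2 : 0 < A3f al a <= 1 - bt + e2) by (rewrite HA3; lra).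
  assert (S3 : A1f al * A3f al a <= (1 - al)*(1 - bt) + e2).
  { apply Rle_trans with ((1-al)*(1-bt+e2)).
    apply Rmult_le_compat; lra.
    assert (0 <= al*e2) by (apply Rmult_le_pos; lra). nra. }
  assert (S4 : (1-al)*(1-bt) <= (1 - (al+bt)/2)^2) by nra.
  assert (S5 : gm + dl <= (al+bt)/2).
  { assert (HI : (al+bt)/2 - gm - dl = al * ((1+a)*(P2v+1) - (a^2*(1+a)*P2v/4 + 2*Q1v*P2v)) / (2*(1+a)*P2v)).
    { unfold gm, dl, bt. field. split; lra. }
    assert (0 <= al * ((1+a)*(P2v+1) - (a^2*(1+a)*P2v/4 + 2*Q1v*P2v)) / (2*(1+a)*P2v)).
    { apply Rle_mult_inv_pos. apply Rmult_le_pos; lra. nra. }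
    lra. }
  assert (Hgm : 0 <= gm <= al).
  { unfold gm. split. apply Rle_mult_inv_pos; nra.
    apply div_le_l; nra. }
  assert (Hdl : 0 <= dl <= al/72).
  { unfold dl. split. assert (0 <= a^2) by nra. nra.
    assert (a^2 <= 1/9) by nra. nra. }
  assert (S6 : (1 - (al+bt)/2)^2 <= (1 - gm - dl)^2).
  { assert (0 <= 1 - (al+bt)/2) by lra. nra. }
  assert (S7 : (1-gm)^2 - al^2*(Q1v^2 - (1+a))/(1+a)^2 <= Ef al a).
  { assert (HI : Ef al a - ((1-gm)^2 - al^2*(Q1v^2 - (1+a))/(1+a)^2)
                = 2*al^5*(P1v - al)/(1+a)^3 + al^10/(1+a)^5).
    { unfold Ef, gm. fold P1v Q1v. field. lra. }
    assert (0 <= 2*al^5*(P1v - al)/(1+a)^3).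
    { apply Rle_mult_inv_pos. apply Rmult_le_pos. lra. lra. apply pow_lt; lra. }
    assert (0 <= al^10/(1+a)^5).
    { apply Rle_mult_inv_pos. apply pow_le; lra. apply pow_lt; lra. }
    lra. }
  assert (S8 : e2 + al^2*(Q1v^2 - (1+a))/(1+a)^2 <= dl*(2*(1-gm) - dl)).
  { assert (T1 : al^2*(Q1v^2 - (1+a))/(1+a)^2 <= al^2 * a^6).
    { apply div_le_l. apply pow_lt; lra.
      assert (1 <= (1+a)^2) by nra.
      assert (0 <= al^2) by nra.
      assert (al^2 * (Q1v^2 - (1+a)) <= al^2 * a^6) by (apply Rmult_le_compat_l; lra).
      assert (0 <= al^2 * a^6) by nra.
      nra. }
    assert (T2 : 3/2*dl <= dl*(2*(1-gm) - dl)).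
    { assert (0 <= dl * (2*(1-gm) - dl - 3/2)) by (apply Rmult_le_pos; lra). lra. }
    assert (T4 : 0 <= a^2) by (apply pow_le; lra).
    assert (T3 : a^6 <= a^2 * (16*al^2/27)).
    { replace (a^6) with (a^2*a^4) by ring. apply Rmult_le_compat_l; lra. }
    assert (T5 : e2 + al^2*(Q1v^2 - (1+a))/(1+a)^2 <= a^6 * (21/16 + al^2)) by lra.
    assert (Hal2 : al^2 <= 1/25).
    { replace (1/25) with ((1/5)^2) by field. apply pow_incr; lra. }
    assert (T6 : a^6 * (21/16 + al^2) <= a^2 * (16*al^2/27) * (21/16 + 1/25)).
    { apply Rmult_le_compat; try lra. apply Rplus_le_le_0_compat; [lra| apply pow_le; lra]. }
    assert (T7 : 0 <= a^2*al*(3/16 - al*(16/27)*(21/16+1/25))).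
    { apply Rmult_le_pos; [apply Rmult_le_pos; lra| lra]. }
    assert (Hdl2 : dl = al*a^2/8) by reflexivity. lra. }
  split.
  - apply Rmult_lt_0_compat; lra.
  - nra.
Qed.

Lemma div_lt_l u d c : 0 < d -> u < c * d -> u / d < c.
Proof. intros. unfold Rdiv. apply Rmult_lt_reg_r with d; auto.
  rewrite Rmult_assoc, Rinv_l by lra. lra. Qed.

Lemma final_ineq a s x : 0 < a <= 1/3 -> s = x*a^2*Uu a -> 0 < s < 1/5 -> 9 < x^2*a -> 0 < x ->
  (1 - s + s^2/2) * A2f a < 1.
Proof.
  intros Ha Hs Hs2 Hx2 Hx.
  pose proof (L_U7 a Ha) as h7. pose proof (L_Upos a Ha) as hu.
  set (q := 9/10 * x * Uu a * (1+a)^2).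
  assert (hq0 : 0 < q).
  { unfold q. apply Rmult_lt_0_compat; [|apply pow_lt; lra].
    apply Rmult_lt_0_compat; [|lra]. lra. }
  assert (hqsq : q^2 = 81/100 * (x^2*a) * (Uu a^2 * (1+a)^4) / a).
  { unfold q. field. lra. }
  assert (hq2 : 1 < q^2).
  { rewrite hqsq. apply Rmult_lt_reg_r with a; [lra|].
    unfold Rdiv. rewrite Rmult_assoc, Rinv_l, Rmult_1_r by lra.
    assert (0 < Uu a ^2 * (1+a)^4) by (apply Rmult_lt_0_compat; apply pow_lt; lra).
    assert (9 * (Uu a^2*(1+a)^4) <= x^2*a * (Uu a^2*(1+a)^4)) by (apply Rmult_le_compat_r; lra).
    lra. }
  assert (hq : 1 < q) by (apply (sq_lt 1 q); lra).
  assert (h1 : 0 < (1+a)^2) by (apply pow_lt; lra).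
  assert (hA : s*(1-s/2)*(1+a)^2 >= 9/10*s*(1+a)^2).
  { assert (0 <= s*(1/10 - s/2)*(1+a)^2) by (apply Rmult_le_pos; [apply Rmult_le_pos|]; lra). lra. }
  assert (hB : 9/10*s*(1+a)^2 = a^2 * q) by (rewrite Hs; unfold q; ring).
  assert (hC : a^2 < a^2*q).
  { assert (0 < a^2) by (apply pow_lt; lra).
    assert (a^2 * 1 < a^2 * q) by (apply Rmult_lt_compat_l; lra). lra. }
  unfold A2f.
  replace ((1 - s + s ^ 2 / 2) * ((1 + a) ^ 2 / (1 + 2 * a)))
    with (((1+a)^2 - s*(1-s/2)*(1+a)^2) / (1+2*a)) by (field; lra).
  apply div_lt_l; [lra|]. nra.
Qed.

Lemma frac_le a b c d : 0 < b -> 0 < d -> a*d <= c*b -> a/b <= c/d.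
Proof. intros Hb Hd H. unfold Rdiv.
  apply Rmult_le_reg_r with (b*d). apply Rmult_lt_0_compat; lra.
  replace (a * / b * (b * d)) with (a*d) by (field; lra).
  replace (c * / d * (b * d)) with (c*b) by (field; lra). lra. Qed.

Lemma pow_lt_l n u v : 0 <= u -> u < v -> u^(S n) < v^(S n).
Proof. intros Hu Huv. induction n as [|n IH]. simpl; lra.
  change (u ^ S (S n)) with (u * u^(S n)). change (v ^ S (S n)) with (v * v^(S n)).
  apply Rmult_le_0_lt_compat; auto. apply pow_le; auto. Qed.

Definition FV x y z := exp (x - 2 * y + z) *
  (y ^ 14 * (x ^ 5 - x ^ 4 - 1) * (z ^ 5 - z ^ 4 - 1)) /
  (x ^ 7 * z ^ 7 * (y ^ 5 - y ^ 4 + 1) ^ 2).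
Definition MD x y z :=
  Phi (x - 2 * y1f x + z2f x) * (x ^ 5 - x ^ 4 - 1) * y ^ 14 * (z2f x * z ^ 4 - z ^ 4 - 1) /
  (x ^ 7 * (y ^ 10 - 2 * y2f x * y ^ 8 + y ^ 8 + 2 * y1f x * y ^ 4 - 2 * y ^ 4 + 1)
   * z1f x * z ^ 6).

Lemma key x y z : 0 < x -> 0 < y -> 0 < z -> y^2 = x^2 + PI^2 -> z^2 = x^2 + 2*PI^2 ->
  PI^2/x^2 <= 1/3 -> FV x y z < MD x y z /\ MD x y z < 1.
Proof.
  intros Hx Hy Hz Hy2 Hz2 Ha3.
  assert (HPI : 3 < PI <= 4) by (pose proof PI2_3_2; pose proof PI_4; lra).
  set (a := PI^2/x^2) in *.
  assert (Ha0 : 0 < a) by (unfold a; apply Rdiv_lt_0_compat; apply pow_lt; lra).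
  assert (Ha : 0 < a <= 1/3) by lra.
  assert (Hxa : x^2 * a = PI^2) by (unfold a; field; lra).
  assert (Hp : 9 < PI^2 <= 16).
  { split. assert (3*3 < PI*PI) by (apply Rmult_le_0_lt_compat; lra). lra.
    assert (PI*PI <= 4*4) by (apply Rmult_le_compat; lra). lra. }
  assert (Hx2 : 27 < x^2).
  { assert (x^2*a <= x^2*(1/3)) by (apply Rmult_le_compat_l; [apply pow_le|]; lra). lra. }
  assert (Hx5 : 5 < x) by (apply sq_lt; lra).
  assert (Ey1 : y1f x = x * P1 a) by (unfold y1f, y2f, P1, a; field; lra).
  assert (Ey2 : y2f x = x * Q1 a) by (unfold y2f, Q1, a; field; lra).
  assert (Ez1 : z1f x = x * P2 a) by (unfold z1f, z2f, P2, Q2, a; field; lra).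
  assert (Ez2 : z2f x = x * Q2 a) by (unfold z2f, Q2, a; field; lra).
  assert (HY : y^2 = x^2*(1+a)) by (rewrite Hy2, <- Hxa; ring).
  assert (HZ : z^2 = x^2*(1+2*a)) by (rewrite Hz2, <- Hxa; ring).
  pose proof (L_P1sq a Ha) as hP1sq. pose proof (L_Q1sq a Ha) as hQ1sq.
  pose proof (L_P2sq a Ha) as hP2sq. pose proof (L_Q2sq a Ha) as hQ2sq.
  pose proof (L_P1ge a Ha) as hP1. pose proof (L_P2ge a Ha) as hP2.
  assert (hQ1 : Q1 a = P1 a + 21*a^6/1024) by (unfold Q1, P1; field).
  assert (hQ2 : Q2 a = P2 a + 21*a^6/16) by (unfold P2; field).
  assert (ha6 : 0 <= a^6) by (apply pow_le; lra).
  assert (hx2p : 0 < x^2) by lra.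
  assert (hy1 : x * P1 a < y).
  { apply sq_lt; [lra|]. rewrite HY. replace ((x*P1 a)^2) with (x^2 * P1 a^2) by ring.
    apply Rmult_lt_compat_l; lra. }
  assert (hy2 : y < x * Q1 a).
  { apply sq_lt; [apply Rmult_le_pos; lra|]. rewrite HY. replace ((x*Q1 a)^2) with (x^2 * Q1 a^2) by ring.
    apply Rmult_lt_compat_l; lra. }
  assert (hz1 : x * P2 a < z).
  { apply sq_lt; [lra|]. rewrite HZ. replace ((x*P2 a)^2) with (x^2 * P2 a^2) by ring.
    apply Rmult_lt_compat_l; lra. }
  assert (hz2 : z < x * Q2 a).
  { apply sq_lt; [apply Rmult_le_pos; lra|]. rewrite HZ. replace ((x*Q2 a)^2) with (x^2 * Q2 a^2) by ring.
    apply Rmult_lt_compat_l; lra. }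
  assert (Ht : x - 2 * (x * P1 a) + x * Q2 a = - (x*a^2*Uu a)) by (unfold P1, Q2, Uu; field).
  pose proof (L_Upos a Ha) as hU0. pose proof (L_Ule a Ha) as hU1.
  set (s := x*a^2*Uu a) in *.
  assert (hs0 : 0 < s) by (unfold s; apply Rmult_lt_0_compat; [apply Rmult_lt_0_compat; [|apply pow_lt]|]; lra).
  assert (hs2 : s^2 = PI^2 * a^3 * Uu a^2) by (unfold s; rewrite <- Hxa; ring).
  assert (hs : s < 1/5).
  { apply sq_lt; [lra|]. rewrite hs2.
    assert (a^3 <= (1/3)^3) by (apply pow_incr; lra).
    assert (Uu a^2 <= (1/4)^2) by (apply pow_incr; lra).
    assert (PI^2 * a^3 <= 16 * (1/3)^3) by (apply Rmult_le_compat; try lra; apply pow_le; lra).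
    assert (PI^2 * a^3 * Uu a^2 <= 16 * (1/3)^3 * (1/4)^2).
    { apply Rmult_le_compat; try lra. apply Rmult_le_pos; [|apply pow_le]; lra. apply pow_le; lra. }
    lra. }
  assert (Hs : 0 < s <= 1/5) by lra.
  pose proof (L_phipos s Hs) as hphi0. pose proof (L_phiq s Hs) as hphiq.
  set (D := y ^ 10 - 2 * (x * Q1 a) * y ^ 8 + y ^ 8 + 2 * (x * P1 a) * y ^ 4 - 2 * y ^ 4 + 1).
  assert (hy5 : 5 < y) by (apply sq_lt; [lra|]; rewrite HY; nra).
  assert (hxa1 : x * a <= 16/5).
  { assert (x*a*x <= 16) by (replace (x*a*x) with (x^2*a) by ring; lra). nra. }
  assert (hxa6 : x * a^6 <= 16/5).
  { assert (a^5 <= 1) by (replace 1 with (1^5) by ring; apply pow_incr; lra).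
    replace (x*a^6) with ((x*a)*a^5) by ring.
    assert (0 <= x*a) by nra. nra. }
  assert (hD : 0 < D).
  { assert (HDe : D = y^8*(y^2 - 2*(x*Q1 a) + 1) + 2*y^4*(x*P1 a - 1) + 1) by (unfold D; ring).
    assert (h1 : 0 < y^2 - 2*(x*Q1 a) + 1).
    { assert (x*Q1 a - y < 21 * (x*a^6)/1024) by (rewrite hQ1 in hy2 |- *; lra). nra. }
    assert (0 < y^8) by (apply pow_lt; lra). assert (0 < y^4) by (apply pow_lt; lra).
    assert (0 < y^8*(y^2 - 2*(x*Q1 a) + 1)) by (apply Rmult_lt_0_compat; lra).
    assert (0 < 2*y^4*(x*P1 a - 1)) by (apply Rmult_lt_0_compat; nra).
    lra. }
  assert (hx7 : 0 < x^7) by (apply pow_lt; lra).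
  assert (hz5 : 5 < z) by (apply sq_lt; [lra|]; rewrite HZ; nra).
  assert (hxp : 0 < x^5 - x^4 - 1).
  { assert (x^5 - x^4 - 1 = x^4*(x-1) - 1) by ring.
    assert (5^4 < x^4) by (apply (pow_lt_l 3); lra).
    assert (625*4 < x^4*(x-1)) by (apply Rmult_le_0_lt_compat; lra). lra. }
  assert (hzp : 0 < z^5 - z^4 - 1).
  { assert (z^5 - z^4 - 1 = z^4*(z-1) - 1) by ring.
    assert (5^4 < z^4) by (apply (pow_lt_l 3); lra).
    assert (625*4 < z^4*(z-1)) by (apply Rmult_le_0_lt_compat; lra). lra. }
  assert (hC : 0 < y^14*(x^5-x^4-1)/x^7).
  { apply Rdiv_lt_0_compat; [apply Rmult_lt_0_compat; [apply pow_lt|]|]; lra. }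
  assert (hB1 : 0 < y^5 - y^4 + 1).
  { assert (y^5 - y^4 + 1 = y^4*(y-1) + 1) by ring.
    assert (0 < y^4) by (apply pow_lt; lra). nra. }
  assert (hB : 0 < (y^5 - y^4 + 1)^2) by (apply pow_lt; lra).
  assert (hDle : D <= (y^5 - y^4 + 1)^2).
  { assert (HH : (y^5 - y^4 + 1)^2 - D = 2*y^8*(x*Q1 a - y) + 2*y^4*(y - x*P1 a)) by (unfold D; ring).
    assert (0 < y^8) by (apply pow_lt; lra). assert (0 < y^4) by (apply pow_lt; lra).
    assert (0 < 2*y^8*(x*Q1 a - y)) by (apply Rmult_lt_0_compat; lra).
    assert (0 < 2*y^4*(y - x*P1 a)) by (apply Rmult_lt_0_compat; lra).
    lra. }
  assert (hz4 : 0 < z^4) by (apply pow_lt; lra).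
  assert (hz6 : 0 < z^6) by (apply pow_lt; lra).
  assert (hz7 : 0 < z^7) by (apply pow_lt; lra).
  assert (hxP2 : 0 < x * P2 a) by (apply Rmult_lt_0_compat; lra).
  assert (hN1 : 0 < x * Q2 a * z^4 - z^4 - 1).
  { assert (x * Q2 a * z^4 - z^4 - 1 = z^4*(x*Q2 a - 1) - 1) by ring.
    assert (625*4 < z^4*(x*Q2 a - 1)).
    { apply Rmult_le_0_lt_compat; try lra. replace 625 with (5^4) by ring.
      apply (pow_lt_l 3); lra. }
    lra. }
  unfold MD. rewrite Ey1, Ey2, Ez1, Ez2, Ht. fold D.
  split.
  -
    unfold FV.
    set (t0 := x - 2*y + z).
    assert (ht0 : t0 < - s) by (unfold t0; lra).
    assert (hexp : exp t0 < Phi (- s)).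
    { apply Rlt_trans with (exp (-s)). apply exp_increasing; lra.
      rewrite exp_Ropp.
      pose proof (exp_T7 s ltac:(lra)) as hT.
      pose proof (L_U8 s Hs) as hU8.
      set (T7 := 1 + s + s^2/2 + s^3/6 + s^4/24 + s^5/120 + s^6/720 + s^7/5040) in *.
      assert (0 < T7) by (unfold T7; assert (0 < s^2) by (apply pow_lt; lra);
        assert (0 < s^3) by (apply pow_lt; lra); assert (0 < s^4) by (apply pow_lt; lra);
        assert (0 < s^5) by (apply pow_lt; lra); assert (0 < s^6) by (apply pow_lt; lra);
        assert (0 < s^7) by (apply pow_lt; lra); lra).
      apply Rle_lt_trans with (/ T7). apply Rinv_le_contravar; lra.
      apply Rmult_lt_reg_r with T7; [lra|]. rewrite Rinv_l by lra. lra. }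
    assert (E0 : exp t0 * (y ^ 14 * (x ^ 5 - x ^ 4 - 1) * (z ^ 5 - z ^ 4 - 1)) /
       (x ^ 7 * z ^ 7 * (y ^ 5 - y ^ 4 + 1) ^ 2)
       = exp t0 * ((y^14*(x^5-x^4-1)/x^7) * ((z^5 - z^4 - 1) / (z^7 * (y^5 - y^4 + 1)^2)))).
    { field. repeat split; lra. }
    assert (E1 : Phi (- s) * (x ^ 5 - x ^ 4 - 1) * y ^ 14 * (x * Q2 a * z ^ 4 - z ^ 4 - 1) /
       (x ^ 7 * D * (x * P2 a) * z ^ 6)
       = Phi (-s) * ((y^14*(x^5-x^4-1)/x^7) * ((x * Q2 a * z^4 - z^4 - 1) / (D * (x*P2 a) * z^6)))).
    { field. repeat split; lra. }
    rewrite E0, E1.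
    assert (hR : (z^5 - z^4 - 1) / (z^7 * (y^5 - y^4 + 1)^2)
                 <= (x * Q2 a * z^4 - z^4 - 1) / (D * (x*P2 a) * z^6)).
    { apply frac_le.
      apply Rmult_lt_0_compat; lra.
      apply Rmult_lt_0_compat; [apply Rmult_lt_0_compat|]; lra.
      apply Rle_trans with ((z^5 - z^4 - 1) * (z^7 * (y^5 - y^4 + 1)^2)).
      - replace (D * (x * P2 a) * z ^ 6) with (D * ((x * P2 a) * z ^ 6)) by ring.
        replace (z^7 * (y^5 - y^4 + 1)^2) with ((y^5 - y^4 + 1)^2 * (z * z^6)) by ring.
        apply Rmult_le_compat_l; [lra|].
        apply Rmult_le_compat; try lra.
        apply Rmult_le_pos; lra.
        apply Rmult_le_compat_r; lra.
      - apply Rmult_le_compat_r. apply Rmult_le_pos; lra.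
        assert (z^5 = z * z^4) by ring.
        assert (z * z^4 <= x * Q2 a * z^4) by (apply Rmult_le_compat_r; lra). lra. }
    assert (hR0 : 0 < (z^5 - z^4 - 1) / (z^7 * (y^5 - y^4 + 1)^2)).
    { apply Rdiv_lt_0_compat; [lra| apply Rmult_lt_0_compat; lra]. }
    set (C := y^14*(x^5-x^4-1)/x^7) in *.
    set (R0 := (z^5 - z^4 - 1) / (z^7 * (y^5 - y^4 + 1)^2)) in *.
    set (R1 := (x * Q2 a * z^4 - z^4 - 1) / (D * (x*P2 a) * z^6)) in *.
    apply Rlt_le_trans with (Phi (-s) * (C * R0)).
    + apply Rmult_lt_compat_r; [apply Rmult_lt_0_compat|]; lra.
    + apply Rmult_le_compat_l; [lra|]. apply Rmult_le_compat_l; lra.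
  -
    set (al := / x).
    assert (Hal : 0 < al <= 1/5).
    { unfold al. split. apply Rinv_0_lt_compat; lra.
      replace (1/5) with (/5) by field. apply Rinv_le_contravar; lra. }
    assert (Haal : a = PI^2 * al^2) by (unfold a, al; field; lra).
    assert (Ha4 : a^4 <= 16*al^2/27).
    { assert (a^3 <= (1/3)^3) by (apply pow_incr; lra).
      replace (a^4) with (a^3 * a) by ring. rewrite Haal at 2.
      assert (0 <= al^2) by (apply pow_le; lra).
      assert (PI^2*al^2 <= 16 * al^2) by (apply Rmult_le_compat_r; lra).
      assert (0 <= a^3) by (apply pow_le; lra).
      assert (a^3 * (PI^2*al^2) <= (1/3)^3 * (16*al^2)) by (apply Rmult_le_compat; lra).
      lra. }
    destruct (chain al a Hal Ha Ha4) as [hc0 hc1].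
    assert (hE : 0 < Ef al a) by lra.
    assert (hDE : D = (x^2*(1+a))^5 * Ef al a).
    { unfold D. replace (y^10) with ((y^2)^5) by ring. replace (y^8) with ((y^2)^4) by ring.
      replace (y^4) with ((y^2)^2) by ring. rewrite HY. unfold Ef, al. field. lra. }
    assert (EM : Phi (- s) * (x ^ 5 - x ^ 4 - 1) * y ^ 14 * (x * Q2 a * z ^ 4 - z ^ 4 - 1) /
       (x ^ 7 * D * (x * P2 a) * z ^ 6)
       = Phi (-s) * A2f a * (A1f al * A3f al a / Ef al a)).
    { rewrite hDE. replace (y^14) with ((y^2)^7) by ring. replace (z^4) with ((z^2)^2) by ring.
      replace (z^6) with ((z^2)^3) by ring. rewrite HY, HZ.
      unfold A2f, A1f, A3f, al. field. repeat split; try lra. change (Ef al a <> 0); lra. }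
    rewrite EM.
    assert (hr : A1f al * A3f al a / Ef al a <= 1).
    { apply div_le_l; lra. }
    assert (hr0 : 0 <= A1f al * A3f al a / Ef al a).
    { apply Rle_mult_inv_pos; lra. }
    assert (hA2 : 0 < A2f a).
    { unfold A2f. apply Rdiv_lt_0_compat; [apply pow_lt|]; lra. }
    assert (hfin : (1 - s + s^2/2) * A2f a < 1).
    { apply (final_ineq a s x Ha eq_refl); [lra| rewrite Hxa; lra | lra]. }
    apply Rle_lt_trans with (Phi (-s) * A2f a).
    + rewrite <- (Rmult_1_r (Phi (-s) * A2f a)) at 2.
      apply Rmult_le_compat_l; [apply Rmult_le_pos|]; lra.
    + apply Rle_lt_trans with ((1 - s + s^2/2) * A2f a); [|lra].
      apply Rmult_le_compat_r; lra.
Qed.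

Lemma mu_sq u : 0 <= u -> (mu u)^2 = PI^2 * u.
Proof. intros. unfold mu. replace ((PI * sqrt u)^2) with (PI^2 * (sqrt u * sqrt u)) by ring.
  rewrite sqrt_sqrt; auto. Qed.
Lemma mu_pos u : 0 < u -> 0 < mu u.
Proof. intros. unfold mu. apply Rmult_lt_0_compat. apply PI_RGT_0. apply sqrt_lt_R0; auto. Qed.

Theorem lemma3p4 (n : nat) (hn : (4 <= n)%nat) :
  fval n < middle n /\ middle n < 1.
Proof.
  assert (Hn : 4 <= INR n) by (replace 4 with (INR 4) by (simpl; lra); apply le_INR; auto).
  change (FV (xv n) (yv n) (zv n) < MD (xv n) (yv n) (zv n) /\ MD (xv n) (yv n) (zv n) < 1).
  pose proof PI_RGT_0.
  assert (HX : (xv n)^2 = PI^2 * (INR n - 1)) by (apply mu_sq; lra).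
  apply key.
  - apply mu_pos; lra.
  - apply mu_pos; lra.
  - apply mu_pos; lra.
  - unfold yv. rewrite mu_sq, HX by lra. ring.
  - unfold zv. rewrite mu_sq, HX by lra. ring.
  - rewrite HX. assert (0 < PI^2) by (apply pow_lt; lra).
    apply div_le_l. apply Rmult_lt_0_compat; lra.
    assert (PI^2 * 1 <= PI^2 * ((INR n - 1)/3)) by (apply Rmult_le_compat_l; lra).
    lra.
Qed.
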